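(* Let $\Omega\subseteq\mathbb R^d$ be nonempty open, $A\in\mathcal A(\Omega)$, $b,c\in L^\infty(\Omega;\mathbb C^d)$, $V\in L^1_{\rm loc}(\Omega)$ nonnegative, $\mathbf A=(A,b,c,V)$, and let $r>0$, $\zeta\in\mathbb C\setminus\{0\}$, $X\in\mathbb C^d$. Suppose that for a.e. $x\in\Omega$, $\Gamma_r^{\mathbf A}(x,\xi)\ge0$ for all $\xi\in\mathbb C^d$. Then $\mathbf H^{\mathbf A(x)}_{F_r}[\zeta;X]\ge0$ for a.e. $x\in\Omega$. Moreover, if $\mathbf A\in\mathcal S_r(\Omega)$, then for a.e. $x\in\Omega$, $$\mathbf H^{\mathbf A(x)}_{F_r}[\zeta;X]\ge r\,\mu_r(\mathbf A)\,|\zeta|^{r-2}\big(|X|^2+V(x)|\zeta|^2\big).$$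
   Context: $\langle \xi,\sigma\rangle=\sum_j\xi_j\overline{\sigma_j}$. $\mathcal{A}(\Omega)$: measurable $A:\Omega\to\mathbb{C}^{d\times d}$ with $\lambda,\Lambda>0$ such that $\Re\langle A(x)\xi,\xi\rangle\ge\lambda|\xi|^2$, $|\langle A(x)\xi,\sigma\rangle|\le\Lambda|\xi||\sigma|$ a.e. For $r>0$: $\mathcal{J}_r\xi=\frac r2(\xi+(1-\frac2r)\overline\xi)$, $\Delta_r(A)=\operatorname{ess\,inf}_{x}\min_{|\xi|=1}\Re\langle A(x)\xi,\xi+|1-2/r|\overline\xi\rangle$, $\mathcal A_r(\Omega)=\{A:\Delta_r(A)>0\}$, $\Gamma_r^{\mathbf A}(x,\xi)=\Re\langle A(x)\xi,\mathcal J_r\xi\rangle+\Re\langle b(x)+\mathcal J_rc(x),\xi\rangle+V(x)$, and $\mathcal S_r(\Omega)$ is the set of such quadruples with $A\in\mathcal A_r(\Omega)$, $|b-c|\le M\sqrt V$ a.e. for some $M$, and $\Gamma_r^{\mathbf A}(x,\xi)\ge\mu(|\xi|^2+V(x))$ a.e., all $\xi$, for some $\mu>0$; $\mu_r(\mathbf A)$ is the largest such $\mu$. Real forms: $\mathcal V_d:\mathbb C^d\to\mathbb R^{2d}$, $\mathcal V_d(\xi_1+i\xi_2)=(\xi_1,\xi_2)$; for $A\in\mathbb C^{d\times d}$, $\mathcal M(A)=\begin{bmatrix}\Re A&-\Im A\\ \Im A&\Re A\end{bmatrix}$. For $\phi:\mathbb C\to\mathbb R$ of class $C^2$ near $\zeta$,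 let $D^2\phi(\zeta)$ and $\nabla\phi(\zeta)$ be the Hessian and gradient of $\phi\circ\mathcal V_1^{-1}$ at $\mathcal V_1(\zeta)$. For $A\in\mathbb C^{d\times d}$, $b,c\in\mathbb C^d$, $V\in\mathbb R$, $\mathbf A=(A,b,c,V)$, define $\mathbf H^{\mathbf A}_\phi[\zeta;X]=\langle (D^2\phi(\zeta)\otimes I_{\mathbb R^d})\mathcal V_d(X),\mathcal M(A)\mathcal V_d(X)\rangle_{\mathbb R^{2d}}+\langle (D^2\phi(\zeta)\otimes I_{\mathbb R^d})\mathcal V_d(X),\mathcal V_d(\zeta c)\rangle_{\mathbb R^{2d}}+\langle\nabla\phi(\zeta),\mathcal V_1(\langle X,b\rangle)\rangle_{\mathbb R^2}+\langle\nabla\phi(\zeta),\mathcal V_1(V\zeta)\rangle_{\mathbb R^2}$, where $\otimes$ is the Kronecker product. $F_r(\zeta)=|\zeta|^r$. $\mathbf A(x)=(A(x),b(x),c(x),V(x))$. *)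

(* Defs.v *)
From HB Require Import structures.
From mathcomp Require Import all_boot all_order all_algebra.
From mathcomp Require Import all_classical all_reals all_analysis.
From mathcomp Require Import complex.
Import Order.TTheory GRing.Theory Num.Theory.
Import numFieldNormedType.Exports.

Set Implicit Arguments.
Unset Strict Implicit.
Unset Printing Implicit Defensive.

Local Open Scope classical_set_scope.
Local Open Scope ring_scope.

Section Defs.
Variable R : realType.
Local Notation C := (R[i]).
Local Notation cRe := (@complex.Re R).
Local Notation cIm := (@complex.Im R).

Definition cabs (z : C) : R := Num.sqrt (cRe z ^+ 2 + cIm z ^+ 2).

Definition cinner d (xi sg : 'cV[C]_d) : C :=
  \sum_(j < d) xi j ord0 * conjc (sg j ord0).

Definition cvnorm2 d (xi : 'cV[C]_d) : R := \sum_(j < d) cabs (xi j ord0) ^+ 2.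
Definition cvnorm d (xi : 'cV[C]_d) : R := Num.sqrt (cvnorm2 xi).

Definition conjv d (xi : 'cV[C]_d) : 'cV[C]_d := map_mx (@conjc R) xi.

Definition Jr d (r : R) (xi : 'cV[C]_d) : 'cV[C]_d :=
  ((r / 2)%:C)%C *: (xi + ((1 - 2 / r)%:C)%C *: conjv xi).

Definition Gamma d (r : R) (A : 'M[C]_d) (b c : 'cV[C]_d) (V : R)
    (xi : 'cV[C]_d) : R :=
  cRe (cinner (A *m xi) (Jr r xi)) + cRe (cinner (b + Jr r c) xi) + V.

Definition box d (a b : 'I_d -> R) : set 'rV[R]_d :=
  [set x | forall i, a i <= x ord0 i <= b i].
Definition boxvol d (a b : 'I_d -> R) : R := \prod_(i < d) Num.max 0 (b i - a i).

Definition lebesgue_outer d (E : set 'rV[R]_d) : \bar R :=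
  ereal_inf [set s : \bar R | exists a b : nat -> 'I_d -> R,
     E `<=` \bigcup_n box (a n) (b n) /\
     s = (\sum_(0 <= n <oo) (boxvol (a n) (b n))%:E)%E].

Definition lnull d (N : set 'rV[R]_d) : Prop := lebesgue_outer N = 0%E.

Definition ae_in d (Om : set 'rV[R]_d) (P : 'rV[R]_d -> Prop) : Prop :=
  exists N, lnull N /\ forall x, Om x -> ~ N x -> P x.

(* Borel sets of R^d (product sigma-algebra of d copies of R) *)
Definition rV_to_tuple d (x : 'rV[R]_d) : d.-tuple R := [tuple x ord0 i | i < d].
Definition borel_set d (E : set 'rV[R]_d) : Prop :=
  exists B : set (d.-tuple R), measurable B /\ E = (@rV_to_tuple d) @^-1` B.

Definition lmeasurable d (E : set 'rV[R]_d) : Prop :=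
  exists B N, borel_set B /\ lnull N /\ (E `\` B) `|` (B `\` E) `<=` N.

Definition lmeas_fun d (Om : set 'rV[R]_d) (f : 'rV[R]_d -> R) : Prop :=
  forall t : R, lmeasurable (Om `&` [set x | f x < t]).
Definition lmeas_funC d (Om : set 'rV[R]_d) (f : 'rV[R]_d -> C) : Prop :=
  lmeas_fun Om (fun x => cRe (f x)) /\ lmeas_fun Om (fun x => cIm (f x)).

Definition Linf d (Om : set 'rV[R]_d) (b : 'rV[R]_d -> 'cV[C]_d) : Prop :=
  (forall j, lmeas_funC Om (fun x => b x j ord0)) /\
  exists M : R, ae_in Om (fun x => cvnorm (b x) <= M).

(* V in L^1_loc(Omega): measurable and int_K |V| < oo for every compact
   K in Omega; the integral of |V| over K is written via the layer-cake
   formula int_0^oo lambda_d({x in K : |V x| > t}) dt. *)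
Definition L1loc d (Om : set 'rV[R]_d) (V : 'rV[R]_d -> R) : Prop :=
  lmeas_fun Om V /\
  forall K : set 'rV[R]_d, K `<=` Om -> compact K ->
    let level (t : R) : \bar R :=
      lebesgue_outer (K `&` [set x | t < `|V x|]) in
    (\int[@lebesgue_measure R]_(t in `[0%R, +oo[%classic) level t < +oo)%E.

Definition ellA d (Om : set 'rV[R]_d) (A : 'rV[R]_d -> 'M[C]_d) : Prop :=
  (forall i j, lmeas_funC Om (fun x => A x i j)) /\
  exists lam Lam : R, 0 < lam /\ 0 < Lam /\
    ae_in Om (fun x =>
      (forall xi : 'cV[C]_d, lam * cvnorm2 xi <= cRe (cinner (A x *m xi) xi)) /\
      (forall xi sg : 'cV[C]_d,
         cabs (cinner (A x *m xi) sg) <= Lam * cvnorm xi * cvnorm sg)).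

Definition ess_inf_in d (Om : set 'rV[R]_d) (f : 'rV[R]_d -> \bar R) : \bar R :=
  ereal_sup [set y : \bar R | ae_in Om (fun x => (y <= f x)%E)].

Definition Delta_r d (Om : set 'rV[R]_d) (r : R) (A : 'rV[R]_d -> 'M[C]_d)
  : \bar R :=
  ess_inf_in Om (fun x => ereal_inf
    [set (cRe (cinner (A x *m xi)
            (xi + ((`|1 - 2 / r|)%:C)%C *: conjv xi)))%:E
       | xi in [set xi : 'cV[C]_d | cvnorm xi = 1]]).

Definition in_A_r d (Om : set 'rV[R]_d) (r : R) (A : 'rV[R]_d -> 'M[C]_d)
  : Prop := (0 < Delta_r Om r A)%E.

Definition Gamma_coercive d (Om : set 'rV[R]_d) (r : R)
    (A : 'rV[R]_d -> 'M[C]_d) (b c : 'rV[R]_d -> 'cV[C]_d)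
    (V : 'rV[R]_d -> R) (mu : R) : Prop :=
  ae_in Om (fun x => forall xi : 'cV[C]_d,
    mu * (cvnorm2 xi + V x) <= Gamma r (A x) (b x) (c x) (V x) xi).

Definition in_S_r d (Om : set 'rV[R]_d) (r : R)
    (A : 'rV[R]_d -> 'M[C]_d) (b c : 'rV[R]_d -> 'cV[C]_d)
    (V : 'rV[R]_d -> R) : Prop :=
  ellA Om A /\ Linf Om b /\ Linf Om c /\
  L1loc Om V /\ ae_in Om (fun x => 0 <= V x) /\
  in_A_r Om r A /\
  (exists M : R, ae_in Om (fun x => cvnorm (b x - c x) <= M * Num.sqrt (V x))) /\
  (exists2 mu : R, 0 < mu & Gamma_coercive Om r A b c V mu).

Definition mu_r d (Om : set 'rV[R]_d) (r : R)
    (A : 'rV[R]_d -> 'M[C]_d) (b c : 'rV[R]_d -> 'cV[C]_d)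
    (V : 'rV[R]_d -> R) : R :=
  sup [set mu : R | 0 < mu /\ Gamma_coercive Om r A b c V mu].

Definition Vd d (X : 'cV[C]_d) : 'cV[R]_(d + d) :=
  col_mx (map_mx (@complex.Re R) X) (map_mx (@complex.Im R) X).

Definition V1 (z : C) : 'rV[R]_2 := \row_(i < 2) if i == ord0 then cRe z else cIm z.
Definition V1inv (p : 'rV[R]_2) : C := (p ord0 ord0 +i* p ord0 ord_max)%C.

Definition Mform d (A : 'M[C]_d) : 'M[R]_(d + d) :=
  block_mx (map_mx (@complex.Re R) A) (- map_mx (@complex.Im R) A)
           (map_mx (@complex.Im R) A) (map_mx (@complex.Re R) A).

Definition kronI d (D : 'M[R]_2) : 'M[R]_(d + d) :=
  block_mx (D ord0 ord0)%:M (D ord0 ord_max)%:M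
           (D ord_max ord0)%:M (D ord_max ord_max)%:M.

Definition rinner n (u v : 'cV[R]_n) : R := \sum_(i < n) u i ord0 * v i ord0.
Definition rinner2 (u v : 'rV[R]_2) : R := \sum_(i < 2) u ord0 i * v ord0 i.

Definition e2 (i : 'I_2) : 'rV[R]_2 := delta_mx ord0 i.

Definition gradC (phi : C -> R) (z : C) : 'rV[R]_2 :=
  \row_(i < 2) 'D_(e2 i) (phi \o V1inv) (V1 z).
Definition hessC (phi : C -> R) (z : C) : 'M[R]_2 :=
  \matrix_(i < 2, j < 2)
    'D_(e2 j) (fun p => 'D_(e2 i) (phi \o V1inv) p) (V1 z).

Definition Hform d (phi : C -> R) (A : 'M[C]_d) (b c : 'cV[C]_d) (V : R)
    (z : C) (X : 'cV[C]_d) : R :=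
  rinner (kronI d (hessC phi z) *m Vd X) (Mform A *m Vd X)
  + rinner (kronI d (hessC phi z) *m Vd X) (Vd (z *: c))
  + rinner2 (gradC phi z) (V1 (cinner X b))
  + rinner2 (gradC phi z) (V1 ((V%:C)%C * z)).

Definition Fr (r : R) (z : C) : R := cabs z `^ r.

End Defs.

(* Main.v *)
Require Import Defs.
From HB Require Import structures.
From mathcomp Require Import all_boot all_order all_algebra.
From mathcomp Require Import all_classical all_reals all_analysis.
From mathcomp Require Import complex.
From mathcomp Require Import ring lra.
Import Order.TTheory GRing.Theory Num.Theory.
Import numFieldNormedType.Exports.
Local Open Scope classical_set_scope.
Local Open Scope ring_scope.

Section Calc.
Context {R : realType}.

Lemma DvE (V : normedModType R) (f : V -> R) (a v : V) :
  'D_v f a = 'D_1 (fun h : R => f (h *: v + a)) 0.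
Proof.
rewrite /derive; set g1 := fun h => h^-1 *: _; set g2 := fun h => h^-1 *: _.
suff -> : g1 = g2 by [].
by apply/funext => h; rewrite /g1 /g2 /= addr0 scale0r add0r [_%:A]mulr1.
Qed.

Definition N2 (p : 'rV[R]_2) : R := p ord0 ord0 ^+ 2 + p ord0 ord_max ^+ 2.
Definition dot2 (p q : 'rV[R]_2) : R := p ord0 ord0 * q ord0 ord0 + p ord0 ord_max * q ord0 ord_max.

Lemma N2_line (p v : 'rV[R]_2) (h : R) :
  N2 (h *: v + p) = (h * v ord0 ord0 + p ord0 ord0) ^+ 2 + (h * v ord0 ord_max + p ord0 ord_max) ^+ 2.
Proof. by rewrite /N2 !mxE. Qed.

Lemma is_derive_N2line (p v : 'rV[R]_2) :
  is_derive (0:R) 1 (fun h : R => N2 (h *: v + p)) (2 * dot2 v p).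
Proof.
have -> : (fun h : R => N2 (h *: v + p)) = (fun h => (h * v ord0 ord0 + p ord0 ord0) ^+ 2 + (h * v ord0 ord_max + p ord0 ord_max) ^+ 2).
  by apply/funext => h; rewrite N2_line.
apply: is_derive_eq.
rewrite /dot2 !(mul0r, add0r, addr0, scaler0). rewrite /GRing.scale/=. rewrite !mulr1. ring.
Qed.

Lemma is_derive_powRcomp (phi : R -> R) (x dphi s : R) :
  is_derive x 1 phi dphi -> 0 < phi x ->
  is_derive x 1 (fun h => phi h `^ s) (s * phi x `^ (s - 1) * dphi).
Proof.
move=> hd hpos.
have dg : derivable (@powR R ^~ s) (phi x) 1.
  by apply: derivable_powR; rewrite in_itv /= andbT.
have df : derivable phi x 1 by case: hd.
have -> : (fun h => phi h `^ s) = (@powR R ^~ s) \o phi by [].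
split.
  apply/derivable1_diffP; apply: differentiable_comp; exact/derivable1_diffP.
rewrite -derive1E derive1_comp // powR_derive1 ?in_itv /= ?andbT //.
by rewrite derive1E derive_val.
Qed.

Lemma Fr_V1inv (r : R) (p : 'rV[R]_2) : Fr r (V1inv p) = N2 p `^ (r / 2).
Proof.
rewrite /Fr /cabs /V1inv /= -powR12_sqrt; last by rewrite /N2 addr_ge0 // sqr_ge0.
by rewrite -powRrM mulrC.
Qed.

Lemma D_powN2 (s : R) (p v : 'rV[R]_2) : 0 < N2 p ->
  'D_v (fun q => N2 q `^ s) p = s * N2 p `^ (s - 1) * (2 * dot2 v p).
Proof.
move=> hp; rewrite DvE.
have e0 : N2 (0 *: v + p) = N2 p by rewrite scale0r add0r.
have := @is_derive_powRcomp (fun h : R => N2 (h *: v + p)) 0 _ s (is_derive_N2line p v).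
rewrite /= e0 => /(_ hp) H; exact: (@derive_val _ _ _ _ _ _ _ H).
Qed.


Lemma is_derive_dotline (e p v : 'rV[R]_2) :
  is_derive (0:R) 1 (fun h : R => 2 * dot2 e (h *: v + p)) (2 * dot2 e v).
Proof.
have -> : (fun h : R => 2 * dot2 e (h *: v + p)) = (fun h => 2 * (e ord0 ord0 * (h * v ord0 ord0 + p ord0 ord0) + e ord0 ord_max * (h * v ord0 ord_max + p ord0 ord_max))).
  by apply/funext => h; rewrite /dot2 !mxE.
apply: is_derive_eq.
rewrite /dot2 !(mul0r, add0r, addr0, scaler0, mulr0). rewrite /GRing.scale/= !mulr1. ring.
Qed.

Lemma D2_powN2 (s : R) (e a v : 'rV[R]_2) : 0 < N2 a ->
  'D_v (fun p => 'D_e (fun q => N2 q `^ s) p) a =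
  s * (N2 a `^ (s - 1) * (2 * dot2 e v) +
       2 * dot2 e a * ((s - 1) * N2 a `^ (s - 1 - 1) * (2 * dot2 v a))).
Proof.
move=> ha; rewrite DvE.
have phic : (fun h : R => N2 (h *: v + a)) @ (0:R) --> N2 a.
  have -> : N2 a = N2 (0 *: v + a) by rewrite scale0r add0r.
  apply: (@differentiable_continuous _ _ _ (0:R) (fun h : R => N2 (h *: v + a))); apply/derivable1_diffP.
  by case: (is_derive_N2line a v).
have near_pos := cvgr_gt _ phic _ ha.
rewrite (@near_eq_derive _ _ _ _ (s \*: ((fun h : R => N2 (h *: v + a) `^ (s - 1)) * (fun h => 2 * dot2 e (h *: v + a))))); last first.
  near=> h; rewrite D_powN2 /=; last by near: h; exact: near_pos.
  by rewrite /GRing.scale /= -mulrA.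
have e0 : N2 (0 *: v + a) = N2 a by rewrite scale0r add0r.
have H1 := @is_derive_powRcomp (fun h : R => N2 (h *: v + a)) 0 _ (s - 1) (is_derive_N2line a v).
rewrite /= e0 in H1; have {}H1 := H1 ha.
have H2 := is_derive_dotline e a v.
have H3 := is_deriveZ s (is_deriveM H1 H2).
apply: eq_trans; first exact: (@derive_val _ _ _ _ _ _ _ H3).
by rewrite /= e0 scale0r add0r /GRing.scale /=.
Unshelve. all: by end_near.
Qed.

End Calc.
Section Alg.
Context {R : realType}.
Local Notation C := (R[i]).
Local Notation cRe := (@complex.Re R).
Local Notation cIm := (@complex.Im R).

Lemma Re_sum n (F : 'I_n -> C) : cRe (\sum_(j < n) F j) = \sum_(j < n) cRe (F j).
Proof. by elim/big_rec2: _ => //= j y1 y2 _ <-; case: (F j); case: y2. Qed.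
Lemma Im_sum n (F : 'I_n -> C) : cIm (\sum_(j < n) F j) = \sum_(j < n) cIm (F j).
Proof. by elim/big_rec2: _ => //= j y1 y2 _ <-; case: (F j); case: y2. Qed.

Lemma rinner_col m n (u1 v1 : 'cV[R]_m) (u2 v2 : 'cV[R]_n) :
  rinner (col_mx u1 u2) (col_mx v1 v2) = rinner u1 v1 + rinner u2 v2.
Proof.
by rewrite /rinner big_split_ord /=; congr (_ + _); apply: eq_bigr => i _;
  rewrite ?col_mxEu ?col_mxEd.
Qed.

Lemma kron_Vd d (h : 'M[R]_2) (X : 'cV[C]_d) :
  kronI d h *m Vd X =
  col_mx (h ord0 ord0 *: map_mx cRe X + h ord0 ord_max *: map_mx cIm X)
         (h ord_max ord0 *: map_mx cRe X + h ord_max ord_max *: map_mx cIm X).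
Proof. by rewrite /kronI /Vd mul_block_col !mul_scalar_mx. Qed.

Lemma Mform_Vd d (A : 'M[C]_d) (X : 'cV[C]_d) :
  Mform A *m Vd X =
  col_mx (map_mx cRe A *m map_mx cRe X - map_mx cIm A *m map_mx cIm X)
         (map_mx cIm A *m map_mx cRe X + map_mx cRe A *m map_mx cIm X).
Proof. by rewrite /Mform /Vd mul_block_col mulNmx. Qed.


Lemma sum2 (F : 'I_2 -> R) : \sum_(i < 2) F i = F ord0 + F ord_max.
Proof. by rewrite big_ord_recl big_ord1; congr (_ + F _); apply: val_inj. Qed.

Definition Hexp d (h : 'M[R]_2) (g : 'rV[R]_2) (A : 'M[C]_d) (b c : 'cV[C]_d)
   (V : R) (z : C) (X : 'cV[C]_d) : R :=
  rinner (kronI d h *m Vd X) (Mform A *m Vd X)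
  + rinner (kronI d h *m Vd X) (Vd (z *: c))
  + rinner2 g (V1 (cinner X b))
  + rinner2 g (V1 ((V%:C)%C * z)).
Arguments Hexp {d}.

Lemma rinner2_V1 (g : 'rV[R]_2) (w : C) :
  rinner2 g (V1 w) = g ord0 ord0 * cRe w + g ord0 ord_max * cIm w.
Proof. by rewrite /rinner2 sum2 !mxE. Qed.

Lemma mapmx_mul_entry d (A : 'M[C]_d) (X : 'cV[C]_d) (f g : C -> R) j :
  (map_mx f A *m map_mx g X) j ord0 = \sum_(k < d) f (A j k) * g (X k ord0).
Proof. by rewrite mxE; apply: eq_bigr => k _; rewrite !mxE. Qed.

Lemma addmxE' (T : nmodType) m n (M1 M2 : 'M[T]_(m, n)) i j : (M1 + M2) i j = M1 i j + M2 i j.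
Proof. by rewrite mxE. Qed.
Lemma oppmxE' m n (M1 : 'M[R]_(m, n)) i j : (- M1) i j = - M1 i j.
Proof. by rewrite !mxE. Qed.

Lemma Hexp_expand d (h : 'M[R]_2) (g : 'rV[R]_2) (A : 'M[C]_d) (b c : 'cV[C]_d) (V : R) (z : C) (X : 'cV[C]_d) :
  let u j := h ord0 ord0 * cRe (X j ord0) + h ord0 ord_max * cIm (X j ord0) in
  let w j := h ord_max ord0 * cRe (X j ord0) + h ord_max ord_max * cIm (X j ord0) in
  Hexp h g A b c V z X =
  \sum_(j < d) \sum_(k < d)
     (u j * (cRe (A j k) * cRe (X k ord0) - cIm (A j k) * cIm (X k ord0))
      + w j * (cIm (A j k) * cRe (X k ord0) + cRe (A j k) * cIm (X k ord0)))
  + \sum_(j < d) (u j * cRe (z * c j ord0) + w j * cIm (z * c j ord0)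
      + g ord0 ord0 * cRe (X j ord0 * conjc (b j ord0))
      + g ord0 ord_max * cIm (X j ord0 * conjc (b j ord0)))
  + (g ord0 ord0 * cRe ((V%:C)%C * z) + g ord0 ord_max * cIm ((V%:C)%C * z)).
Proof.
move=> u w.
rewrite /Hexp kron_Vd Mform_Vd /Vd !rinner_col !rinner2_V1 /cinner Re_sum Im_sum.
rewrite /rinner !mulr_sumr -!big_split /=; congr (_ + _); apply: eq_bigr => j _.
rewrite !addmxE' !oppmxE' !mapmx_mul_entry !mxE.
rewrite big_split /= -!mulr_sumr sumrB big_split /= /u /w.
ring.
Qed.


Lemma Gamma_expand d (r : R) (A : 'M[C]_d) (b c : 'cV[C]_d) (V : R) (xi : 'cV[C]_d) :
  Gamma r A b c V xi =
  \sum_(j < d) \sum_(k < d) cRe (A j k * xi k ord0 * conjc ((Jr r xi) j ord0))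
  + \sum_(j < d) cRe ((b j ord0 + (Jr r c) j ord0) * conjc (xi j ord0)) + V.
Proof.
rewrite /Gamma /cinner !Re_sum; congr (_ + _ + _).
  apply: eq_bigr => j _; rewrite mxE mulr_suml Re_sum; apply: eq_bigr => k _ //.
by apply: eq_bigr => j _; rewrite addmxE'.
Qed.


Lemma core_identity d (r kap z1 z2 : R) (h : 'M[R]_2) (g : 'rV[R]_2)
    (A : 'M[C]_d) (b c : 'cV[C]_d) (V : R) (X : 'cV[C]_d) :
  r != 0 -> z1 ^+ 2 + z2 ^+ 2 != 0 ->
  let n := z1 ^+ 2 + z2 ^+ 2 in
  h ord0 ord0 = kap * ((r - 2) * z1 * z1 + n) ->
  h ord0 ord_max = kap * ((r - 2) * z1 * z2) ->
  h ord_max ord0 = kap * ((r - 2) * z2 * z1) ->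
  h ord_max ord_max = kap * ((r - 2) * z2 * z2 + n) ->
  g ord0 ord0 = kap * n * z1 -> g ord0 ord_max = kap * n * z2 ->
  Hexp h g A b c V (z1 +i* z2)%C X =
  kap * n ^+ 2 * Gamma r A b c V (((z1 / n) +i* (- z2 / n))%C *: X).
Proof.
move=> r0 n0 n h00 h01 h10 h11 g0 g1.
rewrite Hexp_expand Gamma_expand /= h00 h01 h10 h11 g0 g1.
rewrite !mulrDr !mulr_sumr; congr (_ + _ + _).
- apply: eq_bigr => j _; rewrite mulr_sumr; apply: eq_bigr => k _.
  rewrite /Jr /conjv !mxE.
  case: (A j k) => a1 a2; case: (X k ord0) => x1 y1; case: (X j ord0) => x2 y2.
  by rewrite /= /n; field; apply/andP.
- apply: eq_bigr => j _; rewrite /Jr /conjv !mxE.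
  case: (b j ord0) => b1 b2; case: (c j ord0) => c1 c2; case: (X j ord0) => x2 y2.
  by rewrite /= /n; field; apply/andP.
- by rewrite /n; ring.
Qed.

End Alg.
Arguments N2 {R}.
Arguments dot2 {R}.
Arguments Hexp {R d}.
Section Deriv.
Context {R : realType}.
Local Notation C := (R[i]).
Local Notation cRe := (@complex.Re R).
Local Notation cIm := (@complex.Im R).

Lemma FrV1 (r : R) : Fr r \o @V1inv R = (fun q => N2 q `^ (r / 2)).
Proof. by apply/funext => q; rewrite /= Fr_V1inv. Qed.

Lemma N2_V1 (z : C) : N2 (V1 z) = cRe z ^+ 2 + cIm z ^+ 2.
Proof. by rewrite /N2 !mxE. Qed.

Lemma V1_0 (z : C) : V1 z ord0 ord0 = cRe z. Proof. by rewrite !mxE. Qed.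
Lemma V1_1 (z : C) : V1 z ord0 ord_max = cIm z. Proof. by rewrite !mxE. Qed.

Lemma ord2P (i : 'I_2) : i = ord0 \/ i = ord_max.
Proof.
case: i => [[|[|m]] Hi]; [left|right|by []]; exact: val_inj.
Qed.

Lemma dot2_e2 (i : 'I_2) (a : 'rV[R]_2) : dot2 (@e2 R i) a = a ord0 i.
Proof. by case: (ord2P i) => ->; rewrite /dot2 /e2 !mxE /=; ring. Qed.

Lemma dot2_e2e2 (i j : 'I_2) : dot2 (@e2 R i) (@e2 R j) = (i == j)%:R.
Proof. by case: (ord2P i) => ->; case: (ord2P j) => ->; rewrite /dot2 /e2 !mxE /=; ring. Qed.

Lemma N2_V1_gt0 (z : C) : z != 0 -> 0 < N2 (V1 z).
Proof.
rewrite N2_V1; case: z => a b /=; rewrite eq_complex /= negb_and => /orP[] h.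
  by rewrite ltr_pwDl ?sqr_ge0 // exprn_even_gt0.
by rewrite ltr_pwDr ?sqr_ge0 // exprn_even_gt0.
Qed.

Lemma gradC_Fr (r : R) (z : C) : z != 0 -> forall i,
  gradC (Fr r) z ord0 i = r / 2 * N2 (V1 z) `^ (r / 2 - 1) * (2 * V1 z ord0 i).
Proof.
move=> z0 i; rewrite /gradC mxE FrV1 D_powN2 ?N2_V1_gt0 //.
by rewrite dot2_e2.
Qed.

Lemma hessC_Fr (r : R) (z : C) : z != 0 -> forall i j,
  hessC (Fr r) z i j = r / 2 * (N2 (V1 z) `^ (r / 2 - 1) * (2 * (i == j)%:R) +
     2 * V1 z ord0 i * ((r / 2 - 1) * N2 (V1 z) `^ (r / 2 - 1 - 1) * (2 * V1 z ord0 j))).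
Proof.
move=> z0 i j; rewrite /hessC mxE FrV1 D2_powN2 ?N2_V1_gt0 //.
by rewrite !dot2_e2 /e2 mxE eqxx.
Qed.


Lemma Hform_Fr d (r : R) (z : C) (A : 'M[C]_d) (b c : 'cV[C]_d) (V : R) (X : 'cV[C]_d) :
  0 < r -> z != 0 ->
  Hform (Fr r) A b c V z X =
  r * (N2 (V1 z) `^ (r / 2 - 1 - 1)) * N2 (V1 z) ^+ 2 *
  Gamma r A b c V (((cRe z / N2 (V1 z)) +i* (- cIm z / N2 (V1 z)))%C *: X).
Proof.
move=> r0 z0.
have n0 := N2_V1_gt0 z z0.
set n := N2 (V1 z); set P := n `^ (r / 2 - 1 - 1).
have E : n `^ (r / 2 - 1) = P * n.
  rewrite -[in LHS](subrK 1 (r / 2 - 1)) powRD ?powRr1 ?ltW //. by apply/implyP => _; exact: lt0r_neq0.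
have En : n = cRe z ^+ 2 + cIm z ^+ 2 by rewrite /n N2_V1.
transitivity (Hexp (hessC (Fr r) z) (gradC (Fr r) z) A b c V (cRe z +i* cIm z)%C X).
  by case: z {z0 n0 n P E En}.
rewrite En.
apply: core_identity.
- by rewrite gt_eqF.
- by rewrite -En gt_eqF.
- by rewrite hessC_Fr // -/n -/P E V1_0 En /=; field.
- by rewrite hessC_Fr // -/n -/P E V1_0 V1_1 En /=; field.
- by rewrite hessC_Fr // -/n -/P E V1_0 V1_1 En /=; field.
- by rewrite hessC_Fr // -/n -/P E V1_1 En /=; field.
- by rewrite gradC_Fr // -/n -/P E V1_0 En /=; field.
- by rewrite gradC_Fr // -/n -/P E V1_1 En /=; field.
Qed.


Lemma cabs2 (u : C) : cabs u ^+ 2 = cRe u ^+ 2 + cIm u ^+ 2.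
Proof. by rewrite /cabs sqr_sqrtr // addr_ge0 // sqr_ge0. Qed.

Lemma cvnorm2_scale d (z : C) (X : 'cV[C]_d) : z != 0 ->
  cvnorm2 (((cRe z / N2 (V1 z)) +i* (- cIm z / N2 (V1 z)))%C *: X) = cvnorm2 X / N2 (V1 z).
Proof.
move=> z0; have := N2_V1_gt0 z z0; rewrite N2_V1 => n0.
rewrite /cvnorm2 mulr_suml; apply: eq_bigr => j _; rewrite mxE !cabs2.
case: z z0 n0 => z1 z2 _ n0 /=; case: (X j ord0) => x y /=.
by field; rewrite gt_eqF.
Qed.

Lemma cabs_pow (r : R) (z : C) : z != 0 ->
  cabs z `^ (r - 2) = N2 (V1 z) `^ (r / 2 - 1 - 1) * N2 (V1 z).
Proof.
move=> z0; have n0 := N2_V1_gt0 z z0.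
rewrite /cabs -N2_V1 -powR12_sqrt ?ltW // -powRrM.
have -> : 2^-1 * (r - 2) = (r / 2 - 1 - 1) + 1 by field.
by rewrite powRD ?powRr1 ?ltW //; apply/implyP => _; exact: lt0r_neq0.
Qed.

Lemma cabs_sq (z : C) : cabs z ^+ 2 = N2 (V1 z).
Proof. by rewrite cabs2 N2_V1. Qed.

End Deriv.
Section Null.
Context {R : realType}.

Lemma boxvol_ge0 d (a b : 'I_d -> R) : 0 <= boxvol a b.
Proof. by apply: prodr_ge0 => i _; rewrite le_max lexx. Qed.

Lemma outer_ge0 d (E : set 'rV[R]_d) : (0 <= lebesgue_outer E)%E.
Proof.
apply: le_ereal_inf_tmp => _ [a [b [_ ->]]].
by apply: nneseries_ge0 => n _ _; rewrite lee_fin boxvol_ge0.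
Qed.

Lemma lnull_bigcup d (N : nat -> set 'rV[R]_d) :
  (forall n, lnull (N n)) -> lnull (\bigcup_n N n).
Proof.
move=> hN; apply/eqP; rewrite eq_le outer_ge0 andbT.
apply/lee_addgt0Pr => e e0; rewrite add0e.
pose P n (ab : (nat -> 'I_d -> R) * (nat -> 'I_d -> R)) :=
  N n `<=` \bigcup_k box (ab.1 k) (ab.2 k) /\
  (\sum_(0 <= k <oo) (boxvol (ab.1 k) (ab.2 k))%:E <= (e / (2 ^ n.+1)%:R)%:E)%E.
have [G PG] : {G : nat -> (nat -> 'I_d -> R) * (nat -> 'I_d -> R) & forall n, P n (G n)}.
  apply: (@choice _ _ P) => n.
  have : (lebesgue_outer (N n) < (e / (2 ^ n.+1)%:R)%:E)%E.
    by rewrite (hN n) lte_fin divr_gt0.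
  move=> /ereal_inf_lt [y [a [b [cov ->]]] lt].
  by exists (a, b); split => //; exact: ltW.
have /card_esym/ppcard_eqP[f] := card_nat2.
pose g (ij : nat * nat) : \bar R := (boxvol ((G ij.1).1 ij.2) ((G ij.1).2 ij.2))%:E.
have g0 ij : (0 <= g ij)%E by rewrite lee_fin boxvol_ge0.
apply: (@le_trans _ _ (\sum_(0 <= k <oo) g (f k))%E).
  apply: ereal_inf_lbound => /=.
  exists (fun k => (G (f k).1).1 (f k).2), (fun k => (G (f k).1).2 (f k).2); split => //.
  move=> x [i _ Nix]; have [j _ Bx] := (PG i).1 x Nix.
  exists (f^-1%FUN (i, j)) => //=.
  by rewrite invK ?inE.
have -> : (\sum_(0 <= k <oo) g (f k) = \sum_(0 <= i <oo) \sum_(0 <= j <oo) g (i, j))%E.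
  rewrite -(esum_pred_image g _ xpredT) ?[fun=> _]set_true//.
  rewrite image_eq.
  rewrite nneseries_esumT; last by move=> i; exact: nneseries_ge0.
  rewrite (eq_esum (b := fun i => \esum_(j in [set: nat]) g (i, j))); last first.
    by move=> i _; rewrite nneseries_esumT.
  rewrite esum_esum //.
  have -> : [set: nat] `*`` (fun=> [set: nat]) = [set: nat * nat] by apply/seteqP; split.
  by apply: eq_esum => -[i j].
apply: (@le_trans _ _ (\sum_(0 <= i <oo) (e / (2 ^ i.+1)%:R)%:E)%E).
  apply: lee_nneseries.
    by move=> i _ _; apply: nneseries_ge0 => j _ _.
  by move=> i _; exact: (PG i).2.
exact: epsilon_trick0 (ltW e0).
Qed.


Lemma ae_countable d (Om : set 'rV[R]_d) (P : nat -> 'rV[R]_d -> Prop) :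
  (forall k, ae_in Om (P k)) -> ae_in Om (fun x => forall k, P k x).
Proof.
move=> hP; have [G HG] := choice hP.
exists (\bigcup_k G k); split; first by apply: lnull_bigcup => k; exact: (HG k).1.
move=> x Omx nx k; apply: (HG k).2 => // Gx; apply: nx; by exists k.
Qed.

Lemma ae_and d (Om : set 'rV[R]_d) (P Q : 'rV[R]_d -> Prop) :
  ae_in Om P -> ae_in Om Q -> ae_in Om (fun x => P x /\ Q x).
Proof.
move=> hP hQ.
have H : forall k, ae_in Om (fun x => if k is 0%N then P x else Q x).
  by move=> [|k]; [exact: hP | exact: hQ].
have [N [hN HN]] := @ae_countable d Om _ H; exists N; split => // x Omx nx.
by split; [exact: (HN x Omx nx 0%N) | exact: (HN x Omx nx 1%N)].
Qed.

Lemma lim_bound (s q G : R) (mu : nat -> R) :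
  (forall k, mu k <= s) -> (forall k, s - (k.+1%:R)^-1 < mu k) ->
  (forall k, mu k * q <= G) -> s * q <= G.
Proof.
move=> ub adh hG.
have [q0|q0] := leP q 0.
  by apply: le_trans (hG 0%N); rewrite ler_wnM2r.
rewrite leNgt; apply/negP => Gs.
pose eps := (s * q - G) / q.
have eps0 : 0 < eps by rewrite divr_gt0 // subr_gt0.
have [k hk] : exists k : nat, (k.+1%:R)^-1 < eps.
  exists (Num.bound (eps^-1)).
  rewrite invf_plt ?posrE // ?ltr0n //.
  apply: lt_trans (archi_boundP _) _; first by rewrite invr_ge0 ltW.
  by rewrite ltr_nat.
have := hG k; have := adh k.
have : (s - eps) * q = G by rewrite /eps; field; rewrite gt_eqF.
move=> E h1 h2.
have : (s - eps) * q < mu k * q.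
  rewrite ltr_pM2r //; apply: lt_trans h1; by rewrite ltrD2l ltrN2.
by rewrite E => /lt_le_trans /(_ h2); rewrite ltxx.
Qed.

End Null.
Arguments ae_and {R d Om P Q}.
Arguments ae_countable {R d Om P}.

Theorem proposition4p2 (R : realType) (d : nat) (Om : set 'rV[R]_d)
  (A : 'rV[R]_d -> 'M[R[i]]_d) (b c : 'rV[R]_d -> 'cV[R[i]]_d)
  (V : 'rV[R]_d -> R) (r : R) (z : R[i]) (X : 'cV[R[i]]_d) :
  Om !=set0 -> open Om ->
  ellA Om A -> Linf Om b -> Linf Om c ->
  L1loc Om V -> ae_in Om (fun x => 0 <= V x) ->
  0 < r -> z != 0 ->
  ae_in Om (fun x => forall xi : 'cV[R[i]]_d,
                      0 <= Gamma r (A x) (b x) (c x) (V x) xi) ->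
  ae_in Om (fun x => 0 <= Hform (Fr r) (A x) (b x) (c x) (V x) z X) /\
  (in_S_r Om r A b c V ->
   ae_in Om (fun x =>
     r * mu_r Om r A b c V * cabs z `^ (r - 2)
       * (cvnorm2 X + V x * cabs z ^+ 2)
     <= Hform (Fr r) (A x) (b x) (c x) (V x) z X)).
Proof.
move=> _ _ _ _ _ _ hV r0 z0 hG.
have n0 := N2_V1_gt0 z z0.
set n := N2 (V1 z) in n0.
set P := n `^ (r / 2 - 1 - 1).
set w := ((complex.Re z / n) +i* (- complex.Im z / n))%C.
have k0 : 0 <= r * P * n ^+ 2.
  by rewrite mulr_ge0 ?sqr_ge0 // mulr_ge0 ?powR_ge0 // ltW.
split.
  case: hG => N [hN HN]; exists N; split => // x Omx nx.
  by rewrite Hform_Fr // -/n -/P -/w; apply: mulr_ge0 k0 (HN x Omx nx _).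
move=> hS; set s := mu_r Om r A b c V.
have X0 : 0 <= cvnorm2 X.
  by apply: sumr_ge0 => j _; rewrite sqr_ge0.
have [s0|s0] := leP s 0.
  have [N [hN HN]] := ae_and hG hV.
  exists N; split => // x Omx nx; have [HG1 HV1] := HN x Omx nx.
  apply: (@le_trans _ _ 0).
    apply: mulr_le0_ge0; last by rewrite addr_ge0 // mulr_ge0 // sqr_ge0.
    apply: mulr_le0_ge0; last exact: powR_ge0.
    by rewrite pmulr_rle0.
  by rewrite Hform_Fr // -/n -/P -/w; apply: mulr_ge0 k0 (HG1 _).
pose S := [set mu : R | 0 < mu /\ Gamma_coercive Om r A b c V mu].
have hsup : has_sup S.
  apply/not_notP => hns.
  by move: s0; rewrite /s /mu_r -/S sup_out // ltxx.
have adh k : exists mu, S mu /\ s - (k.+1%:R)^-1 < mu.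
  have kp : 0 < (k.+1%:R : R)^-1 by rewrite invr_gt0 ltr0Sn.
  have [mu Smu lt] := sup_adherent kp hsup.
  by exists mu.
have [mu_ hmu] := choice adh.
have hae k : ae_in Om (fun x => forall xi, mu_ k * (cvnorm2 xi + V x) <=
                       Gamma r (A x) (b x) (c x) (V x) xi).
  exact: (hmu k).1.2.
have [N [hN HN]] := ae_countable hae.
exists N; split => // x Omx nx.
rewrite Hform_Fr // -/n -/P -/w cabs_pow // cabs_sq -/n -/P.
have key : s * (cvnorm2 (w *: X) + V x) <= Gamma r (A x) (b x) (c x) (V x) (w *: X).
  apply: (@lim_bound _ _ _ _ mu_).
  - by move=> k; apply: sup_upper_bound => //; exact: (hmu k).1.
  - by move=> k; exact: (hmu k).2.
  - by move=> k; exact: (HN x Omx nx k).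
rewrite /w cvnorm2_scale // -/n in key.
apply: le_trans (ler_wpM2l k0 key).
rewrite le_eqVlt; apply/orP; left; apply/eqP.
by field; rewrite gt_eqF.
Qed.
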